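(* For all integers $m\ge2$, $G_{m,m-1}(q)=2G_{m,m-2}(q)$ and $H_{m,m-1}(q)=2H_{m,m-2}(q)$.
   Context: $q$ is an indeterminate with square root $q^{1/2}$, $[k]=\frac{1-q^k}{1-q}$. Let $T_{m,n}(q)=\sum_{k=1}^n(-1)^{n-k}[k]^mq^{\frac m2(n-k)}$. The polynomials $G_{m,j},H_{m,j}\in\mathbb{Z}[q]$ ($m\ge1$, $0\le j\le m-1$) are those (shown to exist by Guo and Zeng, and uniquely determined) such that for all $n\ge1$: $T_{2m,n}(q)=\sum_{k=1}^m(-q^n)^{m-k}\frac{G_{m,m-k}(q)}{\prod_{i=0}^{m-k}(1+q^{m-i})}([n][n+1])^k$, and $T_{2m-1,n}(q)=(-1)^{m+n}H_{m,m-1}(q^{\frac12})\frac{q^{(m-\frac12)n}}{(1+q^{\frac12})^m\prod_{i=0}^{m-1}(1+q^{m-i-\frac12})}+\frac{1-q^{n+\frac12}}{1-q^{\frac12}}\sum_{k=1}^m(-q^n)^{m-k}\frac{H_{m,m-k}(q^{\frac12})([n][n+1])^{k-1}}{(1+q^{\frac12})^{m-k+1}\prod_{i=0}^{m-k}(1+q^{m-i-\frac12})}$. *)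

(* Defs.v *)
From HB Require Import structures.
From mathcomp Require Import all_boot all_order all_algebra fraction.
Set Implicit Arguments. Unset Strict Implicit. Unset Printing Implicit Defensive.
Import Order.TTheory GRing.Theory Num.Theory.
Local Open Scope ring_scope.

(* We work in the field K = Q(Z[s]) of rational functions in an indeterminate
   s, which plays the role of q^{1/2}; thus q = s^2. *)
Definition K := {fraction {poly int}}.
Definition s : K := FracField.tofrac ('X : {poly int}).
Definition q : K := s ^+ 2.

Definition qint (k : nat) : K := (1 - q ^+ k) / (1 - q).

(* T_{m,n}(q) = sum_{k=1}^n (-1)^{n-k} [k]^m q^{(m/2)(n-k)};
   note q^{(m/2)(n-k)} = s^{m(n-k)}. *)
Definition T (m n : nat) : K :=
  \sum_(1 <= k < n.+1) (-1) ^+ (n - k) * qint k ^+ m * s ^+ (m * (n - k)).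

(* p(q) for p in Z[q] : substitute q = s^2 *)
Definition evq (p : {poly int}) : K := FracField.tofrac (p \Po ('X ^+ 2)).
(* p(q^{1/2}) for p in Z[q] : substitute q = s *)
Definition evsq (p : {poly int}) : K := FracField.tofrac p.

Definition G_spec (G : nat -> nat -> {poly int}) : Prop :=
  forall m n : nat, (1 <= m)%N -> (1 <= n)%N ->
    T (2 * m) n =
    \sum_(1 <= k < m.+1)
       (- q ^+ n) ^+ (m - k) * evq (G m (m - k)%N)
       / (\prod_(0 <= i < (m - k).+1) (1 + q ^+ (m - i)))
       * (qint n * qint n.+1) ^+ k.

(* The defining identity of the H_{m,j} (Guo--Zeng), for all m, n >= 1;
   q^{m-i-1/2} = s^{2(m-i)-1}, q^{(m-1/2)n} = s^{(2m-1)n}. *)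
Definition H_spec (H : nat -> nat -> {poly int}) : Prop :=
  forall m n : nat, (1 <= m)%N -> (1 <= n)%N ->
    T (2 * m - 1) n =
    (-1) ^+ (m + n) * evsq (H m (m - 1)%N) * s ^+ ((2 * m - 1) * n)
      / ((1 + s) ^+ m * \prod_(0 <= i < m) (1 + s ^+ (2 * (m - i) - 1)))
    + (1 - s ^+ (2 * n + 1)) / (1 - s) *
      \sum_(1 <= k < m.+1)
        (- q ^+ n) ^+ (m - k) * evsq (H m (m - k)%N)
        * (qint n * qint n.+1) ^+ (k - 1)
        / ((1 + s) ^+ (m - k + 1)
           * \prod_(0 <= i < (m - k).+1) (1 + s ^+ (2 * (m - i) - 1))).

(* Main.v *)
Require Import Defs.
From HB Require Import structures.
From mathcomp Require Import all_boot all_order all_algebra fraction.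
From mathcomp Require Import ring zify.
Import GRing.Theory.
Local Open Scope ring_scope.

Lemma nzK (p : {poly int}) (c : int) : p.[c] != 0 -> FracField.tofrac p != 0.
Proof. by rewrite tofrac_eq0; apply: contraNneq => ->; rewrite horner0. Qed.

Lemma sE : s = FracField.tofrac 'X. Proof. by []. Qed.

Lemma nz_1q : 1 - q != 0.
Proof.
have -> : 1 - q = FracField.tofrac (1 - 'X ^+ 2) by rewrite tofracB tofrac1 tofracXn.
by apply: (@nzK _ 2); rewrite !hornerE.
Qed.

Lemma nz_1s : 1 - s != 0.
Proof.
have -> : 1 - s = FracField.tofrac (1 - 'X) by rewrite tofracB tofrac1.
by apply: (@nzK _ 2); rewrite !hornerE.
Qed.

Lemma nz_sum (a b : nat) : s ^+ a + s ^+ b != 0.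
Proof.
have -> : s ^+ a + s ^+ b = FracField.tofrac ('X ^+ a + 'X ^+ b) by rewrite tofracD !tofracXn.
by apply: (@nzK _ 1); rewrite !hornerE !expr1n.
Qed.

Lemma nz_1sk (k : nat) : 1 + s ^+ k != 0.
Proof. by rewrite -(expr0 s) nz_sum. Qed.

Lemma nz_1qk (k : nat) : 1 + q ^+ k != 0.
Proof. by rewrite /q -exprM nz_1sk. Qed.

Lemma nz_sk (k : nat) : s ^+ k != 0.
Proof.
rewrite sE -tofracXn; apply: (@nzK _ 1); by rewrite !hornerE expr1n.
Qed.

Lemma nz_2 : (2%:R : K) != 0.
Proof.
have -> : (2%:R : K) = s ^+ 0 + s ^+ 0 by rewrite expr0.
exact: nz_sum.
Qed.

Lemma s_inj (a b : nat) : s ^+ a = s ^+ b -> a = b.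
Proof.
rewrite sE -!tofracXn => /eqP; rewrite tofrac_eq => /eqP h.
by have := congr1 (fun p : {poly int} => size p) h; rewrite /= !size_polyXn => -[].
Qed.

Lemma evq_inj (p r : {poly int}) : evq p = evq r -> p = r.
Proof.
rewrite /evq => /eqP; rewrite tofrac_eq => /eqP h.
apply/polyP => i; have := congr1 (fun p : {poly int} => p`_(2 * i)) h.
by rewrite /= !coef_comp_poly_Xn // dvdn_mulr // mulKn.
Qed.

Lemma evsq_inj (p r : {poly int}) : evsq p = evsq r -> p = r.
Proof. by rewrite /evsq => /eqP; rewrite tofrac_eq => /eqP. Qed.

Lemma nz_1q2 : (1 - q) ^+ 2 != 0.
Proof.
have -> : (1 - q) ^+ 2 = FracField.tofrac ((1 - 'X ^+ 2) ^+ 2) by rewrite tofracXn tofracB tofrac1 tofracXn.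
by apply: (@nzK _ 2); rewrite !hornerE.
Qed.

Lemma nz_1q1 : 1 + q != 0.
Proof. by rewrite -[q]expr1 nz_1qk. Qed.


Definition f (M j : nat) : K := s ^+ (2 * j) / (s ^+ M + s ^+ (2 * j)).
Definition cc (M j : nat) : K :=
  ((1 - q) ^+ M)^-1 * 'C(M, j)%:R * (-1) ^+ j * f M j.

Lemma aux1 (F : fieldType) (A B D a S x : F) : S + a != 0 ->
  A * B * D * (a / (S + a)) * (a * x) = A * (B * D * (a * x)) - S * (A * B * D * (a / (S + a)) * x).
Proof. move=> h; field. exact: h. Qed.

Lemma T_rec M n : T M n.+1 = - s ^+ M * T M n + qint n.+1 ^+ M.
Proof.
rewrite /T big_nat_recr //= subnn muln0 !expr0 mulr1 mul1r; congr (_ + _).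
rewrite big_distrr /=; apply: eq_big_nat => k /andP [_ hk].
rewrite subSn // exprS mulnS exprD. ring.
Qed.

Lemma qint_pow M k : qint k ^+ M =
  ((1 - q) ^+ M)^-1 * \sum_(j < M.+1) 'C(M, j)%:R * (-1) ^+ j * (s ^+ (2 * j)) ^+ k.
Proof.
rewrite /qint expr_div_n mulrC; congr (_ * _).
rewrite addrC exprD1n; apply: eq_bigr => j _.
rewrite /q -!exprM -mulrA mulr_natl; congr (_ *+ _).
by rewrite (exprNn (s ^+ _)) -exprM mulnAC.
Qed.

Lemma T_closed M n : T M n =
  \sum_(j < M.+1) cc M j * (s ^+ (2 * j)) ^+ n
  - (-1) ^+ n * (s ^+ M) ^+ n * \sum_(j < M.+1) cc M j.
Proof.
elim: n => [|n IH].
  rewrite /T big_geq // expr0 mul1r expr0 mul1r.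
  by under eq_bigr do rewrite expr0 mulr1; rewrite subrr.
rewrite T_rec IH.
have key : \sum_(j < M.+1) cc M j * (s ^+ (2 * j)) ^+ n.+1 =
   qint n.+1 ^+ M - s ^+ M * \sum_(j < M.+1) cc M j * (s ^+ (2 * j)) ^+ n.
  rewrite qint_pow big_distrr big_distrr -sumrB; apply: eq_bigr => j _.
  have hnz := nz_sum M (2 * j).
  rewrite /cc /f exprS; exact: aux1.
rewrite key !exprS; ring.
Qed.


Definition tay (p : {poly K}) (i : nat) : K := (p \Po ('X + 1))`_i.

Lemma tayD p r i : tay (p + r) i = tay p i + tay r i.
Proof. by rewrite /tay comp_polyD coefD. Qed.
Lemma tayB p r i : tay (p - r) i = tay p i - tay r i.
Proof. by rewrite /tay comp_polyB coefB. Qed.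
Lemma tayZ a p i : tay (a *: p) i = a * tay p i.
Proof. by rewrite /tay comp_polyZ coefZ. Qed.
Lemma tay_sum (I : Type) (r : seq I) (P : pred I) (F : I -> {poly K}) i :
  tay (\sum_(j <- r | P j) F j) i = \sum_(j <- r | P j) tay (F j) i.
Proof. by rewrite /tay raddf_sum coef_sum. Qed.

Lemma coefX1n (j i : nat) : (('X + 1) ^+ j : {poly K})`_i = 'C(j, i)%:R.
Proof.
elim: j i => [|j IH] i.
  by rewrite expr0 coef1 bin0n.
rewrite exprSr mulrDr mulr1 coefD coefMX; case: i => [|i] /=.
  by rewrite add0r IH !bin0.
by rewrite !IH binS natrD addrC.
Qed.

Lemma tayXn j i : tay ('X ^+ j) i = 'C(j, i)%:R.
Proof. by rewrite /tay comp_Xn_poly coefX1n. Qed.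

Lemma coef1M (p r : {poly K}) : (p * r)`_1 = p`_0 * r`_1 + p`_1 * r`_0.
Proof. by rewrite coefM !big_ord_recr big_ord0 /= add0r. Qed.

Lemma tay_shift (p r : {poly K}) k i : p \Po ('X + 1) = 'X ^+ k * r ->
  tay p i = if (i < k)%N then 0 else r`_(i - k).
Proof. by rewrite /tay => ->; rewrite coefXnM. Qed.

Lemma roots_eq0 (p : {poly K}) (z : nat -> K) :
  injective z -> (forall t, p.[z t] = 0) -> p = 0.
Proof.
move=> zi hz; apply/eqP; apply/negPn/negP => hp.
have h1 : all (root p) (map z (iota 0 (size p))).
  by apply/allP => x /mapP [t _ ->]; rewrite /root hz.
have h2 : uniq (map z (iota 0 (size p))) by rewrite map_inj_uniq // iota_uniq.
by have := max_poly_roots hp h1 h2; rewrite size_map size_iota ltnn.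
Qed.

Lemma pairing (N : nat) (a g : nat -> K) :
  (forall j, (j <= N)%N -> a (N - j)%N = a j) ->
  (forall j, (j <= N)%N -> g j + g (N - j)%N = 1) ->
  2%:R * \sum_(j < N.+1) a j * g j = \sum_(j < N.+1) a j.
Proof.
move=> ha hg.
have rev : \sum_(j < N.+1) a j * g j = \sum_(j < N.+1) a j * g (N - j)%N.
  rewrite (reindex_inj rev_ord_inj) /=; apply: eq_bigr => j _.
  by rewrite subSS ha // -ltnS.
rewrite mulr2n mulrDl mul1r {2}rev -big_split /=; apply: eq_bigr => j _.
by rewrite -mulrDr hg ?mulr1 // -ltnS.
Qed.

Lemma oneX_exp N : (1 - 'X : {poly K}) ^+ N =
  \sum_(j < N.+1) ('C(N, j)%:R * (-1) ^+ j) *: 'X ^+ j.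
Proof.
rewrite addrC exprD1n; apply: eq_bigr => j _.
rewrite -scalerA scaler_nat; congr (_ *+ _).
by rewrite (exprNn 'X) -mul_polyC rmorphXn rmorphN1.
Qed.

Lemma tay_oneX N i : (i < N)%N -> tay ((1 - 'X) ^+ N) i = 0.
Proof.
move=> hi; rewrite (@tay_shift _ (((-1) ^+ N)%:P) N) ?hi //.
rewrite rmorphXn rmorphB rmorph1 /= comp_polyX.
have -> : (1 - ('X + 1) : {poly K}) = - 'X by ring.
by rewrite (exprNn 'X) mulrC rmorphXn rmorphN1.
Qed.

Lemma aux_pair (F : fieldType) (a b S : F) : S + a != 0 -> S + b != 0 -> a * b = S * S ->
  a / (S + a) + b / (S + b) = 1.
Proof.
move=> ha hb hab; rewrite addf_div //.
have -> : a * (S + b) + b * (S + a) = (S + a) * (S + b) + (a * b - S * S) by ring.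
by rewrite hab subrr addr0 divff // mulf_neq0.
Qed.

Lemma f_pair N j : (j <= N)%N -> f N j + f N (N - j) = 1.
Proof.
move=> hj; rewrite /f; apply: aux_pair; rewrite ?nz_sum //.
by rewrite -!exprD -mulnDr subnKC // addnn -mul2n.
Qed.

Lemma sign_sub N j : (j <= N)%N -> (-1) ^+ (N - j) = (-1) ^+ N * (-1) ^+ j :> K.
Proof.
move=> hj; rewrite -{2}(subnK hj) exprD -mulrA -exprD addnn -mul2n exprM sqrrN !expr1n mulr1.
by [].
Qed.

Definition cq : K := ((1 - q) ^+ 2)^-1.
Definition U : {poly K} := cq%:P * ((1%:P - 'X) * (1%:P - q%:P * 'X)).
Definition V : {poly K} := cq%:P * (q%:P * 'X + q%:P - 1%:P).

Lemma U_shift_gen (F : fieldType) (c x : F) :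
  (c%:P * ((1%:P - 'X) * (1%:P - x%:P * 'X))) \Po ('X + 1) = 'X * (c%:P * (x%:P * 'X + x%:P - 1%:P)).
Proof. rewrite !(comp_polyM, comp_polyB, comp_polyC, comp_polyX, comp_polyD); ring. Qed.

Lemma U_shift : U \Po ('X + 1) = 'X * V.
Proof. exact: U_shift_gen. Qed.

Lemma U_eval_gen (F : fieldType) (c y x : F) :
  (c%:P * ((1%:P - 'X) * (1%:P - y%:P * 'X))).[x] = c * ((1 - x) * (1 - y * x)).
Proof. by rewrite !(hornerM, hornerD, hornerN, hornerC, hornerX). Qed.

Lemma aux_U (F : fieldType) (y x : F) : 1 - y != 0 ->
  ((1 - y) ^+ 2)^-1 * ((1 - x) * (1 - y * x)) = (1 - x) / (1 - y) * ((1 - y * x) / (1 - y)).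
Proof. move=> h; field. exact: h. Qed.

Lemma U_eval n : U.[q ^+ n] = qint n * qint n.+1.
Proof. rewrite /U U_eval_gen /cq aux_U; [by rewrite /qint exprS | exact: nz_1q]. Qed.

Lemma V0_gen (F : fieldType) (c x : F) : (c%:P * (x%:P * 'X + x%:P - 1%:P))`_0 = c * (x - 1).
Proof. by rewrite coefCM coefB coefD coefCM coefX !coefC /= mulr0 add0r. Qed.
Lemma V1_gen (F : fieldType) (c x : F) : (c%:P * (x%:P * 'X + x%:P - 1%:P))`_1 = c * x.
Proof. by rewrite coefCM coefB coefD coefCM coefX !coefC /= mulr1 subr0 addr0. Qed.
Lemma V0 : V`_0 = cq * (q - 1). Proof. exact: V0_gen. Qed.
Lemma V1 : V`_1 = cq * q. Proof. exact: V1_gen. Qed.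

Lemma coefNX1n_gen (F : fieldType) j i : ((- ('X + 1)) ^+ j : {poly F})`_i = (-1) ^+ j * 'C(j, i)%:R.
Proof.
have e : ((-1) ^+ j : {poly F}) = ((-1) ^+ j)%:P by rewrite rmorphXn rmorphN1.
rewrite (exprNn ('X + 1 : {poly F})) e coefCM; congr (_ * _); clear e.
elim: j i => [|j IH] i.
  by rewrite expr0 coef1 bin0n.
rewrite exprSr mulrDr mulr1 coefD coefMX; case: i => [|i] /=.
  by rewrite add0r IH !bin0.
by rewrite !IH binS natrD addrC.
Qed.
Lemma coefNX1n j i : ((- ('X + 1)) ^+ j : {poly K})`_i = (-1) ^+ j * 'C(j, i)%:R.
Proof. exact: coefNX1n_gen. Qed.


Definition PT M : {poly K} := \sum_(j < M.+1) cc M j *: 'X^j.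
Definition CT M : K := \sum_(j < M.+1) cc M j.

Lemma PT_eval M x : (PT M).[x] = \sum_(j < M.+1) cc M j * x ^+ j.
Proof. by rewrite /PT horner_sum; apply: eq_bigr => j _; rewrite hornerZ hornerXn. Qed.

Definition gG (G : nat -> nat -> {poly int}) m k : K :=
  evq (G m (m - k)%N) / \prod_(0 <= i < (m - k).+1) (1 + q ^+ (m - i)).
Definition RG G m : {poly K} :=
  \sum_(1 <= k < m.+1) ((- 'X) ^+ (m - k) * (gG G m k)%:P * U ^+ k).

Lemma horner_term (F : fieldType) (a : F) (p : {poly F}) j k x :
  ((- 'X) ^+ j * a%:P * p ^+ k).[x] = (- x) ^+ j * a * p.[x] ^+ k.
Proof. by rewrite !hornerE. Qed.

Lemma RG_eval G m n : (RG G m).[q ^+ n] =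
  \sum_(1 <= k < m.+1) (- q ^+ n) ^+ (m - k) * evq (G m (m - k)%N)
       / (\prod_(0 <= i < (m - k).+1) (1 + q ^+ (m - i)))
       * (qint n * qint n.+1) ^+ k.
Proof.
rewrite /RG horner_sum; apply: eq_bigr => k _.
by rewrite !hornerM !horner_exp hornerN hornerX hornerC U_eval /gG mulrA.
Qed.

Lemma q_inj a b : q ^+ a = q ^+ b -> a = b.
Proof. by rewrite /q -!exprM => /s_inj /eqP; rewrite eqn_mul2l /= => /eqP. Qed.

Lemma G_poly G m : G_spec G -> (1 <= m)%N -> PT (2 * m) - CT (2 * m) *: 'X^m = RG G m.
Proof.
move=> hG hm; apply/eqP; rewrite -subr_eq0; apply/eqP.
apply: (@roots_eq0 _ (fun t => q ^+ (2 * t.+1))).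
  by move=> a b /q_inj /eqP; rewrite eqn_mul2l /= => /eqP [].
move=> t; set n := (2 * t.+1)%N.
have h := hG m n hm isT.
rewrite !hornerD !hornerN hornerZ hornerXn PT_eval RG_eval -h T_closed.
have e1 : (-1) ^+ n = 1 :> K.
  by rewrite /n exprM expr2 mulN1r opprK expr1n.
have e2 : (s ^+ (2 * m)) ^+ n = (q ^+ n) ^+ m.
  by rewrite /q -!exprM -mulnA (mulnC m).
rewrite e1 e2 mul1r.
have -> : \sum_(j < (2 * m).+1) cc (2 * m) j * s ^+ (2 * j) ^+ n =
          \sum_(j < (2 * m).+1) cc (2 * m) j * (q ^+ n) ^+ j.
  by apply: eq_bigr => j _; rewrite /q -!exprM -mulnA (mulnC j).
rewrite /CT; ring.
Qed.


Definition LG (m : nat) (p : {poly K}) : K :=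
  (m%:R) ^+ 2 * tay p 0 + (1 - (2 * m)%:R) * tay p 1 + 2%:R * tay p 2.

Lemma auxB (F : fieldType) (a b c x y z u v w : F) :
  a * (x - u) + b * (y - v) + c * (z - w) = (a * x + b * y + c * z) - (a * u + b * v + c * w).
Proof. ring. Qed.
Lemma auxZ (F : fieldType) (a b c x y z e : F) :
  a * (e * x) + b * (e * y) + c * (e * z) = e * (a * x + b * y + c * z).
Proof. ring. Qed.
Lemma LGB m p r : LG m (p - r) = LG m p - LG m r.
Proof. by rewrite /LG !tayB auxB. Qed.
Lemma LGZ m a p : LG m (a *: p) = a * LG m p.
Proof. by rewrite /LG !tayZ auxZ. Qed.
Lemma LG_sum m (I : Type) (r : seq I) (P : pred I) (F : I -> {poly K}) :
  LG m (\sum_(j <- r | P j) F j) = \sum_(j <- r | P j) LG m (F j).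
Proof. by rewrite /LG !tay_sum !big_distrr -!big_split. Qed.

Lemma bin2_nat j : ('C(j, 2) * 2 = j * j.-1)%N.
Proof. have -> : ('C(j, 2) * 2 = 'C(j, 2) * 2`!)%N by []. by rewrite bin_ffact ffactnS ffactn1. Qed.

Lemma aux_l (F : fieldType) (J M B : F) : 2 * B = J * (J - 1) ->
  M ^+ 2 * 1 + (1 - 2 * M) * J + 2 * B = (J - M) ^+ 2.
Proof. move=> h; rewrite h. Timeout 15 ring. Qed.

Lemma LG_Xn m j : LG m ('X^j) = (j%:R - m%:R) ^+ 2.
Proof.
rewrite /LG !tayXn bin0 bin1 natrM; apply: aux_l.
rewrite -natrM mulnC bin2_nat natrM; case: j => [|j]; first by rewrite !mul0r.
by rewrite mulrSr addrK.
Qed.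

Lemma LG_oneX m : (2 <= m)%N -> LG m ((1 - 'X) ^+ (2 * m)) = 0.
Proof.
move=> hm; rewrite /LG !tay_oneX; first by rewrite !mulr0 !addr0.
all: lia.
Qed.

Lemma aux_sym (F : fieldType) (J M : F) : (2%:R * M - J - M) ^+ 2 = (J - M) ^+ 2.
Proof. ring. Qed.

Lemma LG_PT m : (2 <= m)%N -> LG m (PT (2 * m)) = 0.
Proof.
move=> hm; rewrite /PT LG_sum.
under eq_bigr do rewrite LGZ LG_Xn.
set A := ((1 - q) ^+ (2 * m))^-1.
pose a j := A * 'C(2 * m, j)%:R * (-1) ^+ j * (j%:R - m%:R) ^+ 2.
have e : \sum_(j < (2 * m).+1) cc (2 * m) j * (j%:R - m%:R) ^+ 2 =
         \sum_(j < (2 * m).+1) a j * f (2 * m) j.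
  by apply: eq_bigr => j _; rewrite /cc /a mulrAC.
have sym : forall j, (j <= 2 * m)%N -> a (2 * m - j)%N = a j.
  move=> j hj; rewrite /a bin_sub // sign_sub // natrB // natrM aux_sym.
  by rewrite exprM expr2 mulN1r opprK expr1n mul1r.
have hp := @pairing (2 * m) a (f (2 * m)) sym (@f_pair (2 * m)).
have hs : \sum_(j < (2 * m).+1) a j = 0.
  have := LG_oneX m hm; rewrite oneX_exp LG_sum.
  under eq_bigr do rewrite LGZ LG_Xn.
  move=> h; rewrite /a; under eq_bigr do rewrite -!mulrA.
  by rewrite -big_distrr /=; under eq_bigr do rewrite mulrA; rewrite h mulr0.
rewrite e; apply: (mulfI nz_2); by rewrite hp hs mulr0.
Qed.

Lemma LG_Xm m : LG m ('X^m) = 0.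
Proof. by rewrite LG_Xn subrr expr0n. Qed.


Lemma term_shift_gen (F : fieldType) (g : F) (u v : {poly F}) j k :
  u \Po ('X + 1) = 'X * v ->
  ((- 'X) ^+ j * g%:P * u ^+ k) \Po ('X + 1) = 'X ^+ k * ((- ('X + 1)) ^+ j * g%:P * v ^+ k).
Proof.
move=> hu; rewrite !comp_polyM comp_polyC rmorphXn rmorphN /= comp_polyX.
rewrite rmorphXn /= hu exprMn; ring.
Qed.

Lemma gen_c0 (F : fieldType) (g : F) (v : {poly F}) j :
  ((- ('X + 1)) ^+ j * g%:P * v)`_0 = (-1) ^+ j * g * v`_0.
Proof. by rewrite !coef0M coefC /= coefNX1n_gen bin0 mulr1. Qed.

Lemma coef1M_gen (F : fieldType) (p r : {poly F}) : (p * r)`_1 = p`_0 * r`_1 + p`_1 * r`_0.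
Proof. by rewrite coefM !big_ord_recr big_ord0 /= add0r. Qed.

Lemma gen_c1 (F : fieldType) (g : F) (v : {poly F}) j :
  ((- ('X + 1)) ^+ j * g%:P * v)`_1 = (-1) ^+ j * g * (v`_1 + j%:R * v`_0).
Proof.
rewrite coef1M_gen !coefMC !coefNX1n_gen bin0 bin1 mulr1.
by rewrite mulrDr mulrA; congr (_ + _); rewrite -!mulrA; congr (_ * _); rewrite mulrCA.
Qed.

Lemma gen_c0sq (F : fieldType) (g : F) (v : {poly F}) j :
  ((- ('X + 1)) ^+ j * g%:P * v ^+ 2)`_0 = (-1) ^+ j * g * v`_0 ^+ 2.
Proof. by rewrite gen_c0 expr2 coef0M. Qed.

Lemma tay_term j k g i : tay ((- 'X) ^+ j * g%:P * U ^+ k) i =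
  if (i < k)%N then 0 else ((- ('X + 1)) ^+ j * g%:P * V ^+ k)`_(i - k).
Proof. apply: tay_shift. Time have h := @term_shift_gen K g U V j k U_shift. Time exact h. Time Qed.

Lemma LG_term_big m j k g : (3 <= k)%N -> LG m ((- 'X) ^+ j * g%:P * U ^+ k) = 0.
Proof.
move=> hk; rewrite /LG !tay_term.
rewrite (leq_trans _ hk) // (leq_trans _ hk) // (leq_trans _ hk) //.
by rewrite !mulr0 !addr0.
Qed.

Lemma LG_term1 m j g : LG m ((- 'X) ^+ j * g%:P * U ^+ 1) =
  (1 - (2 * m)%:R) * ((-1) ^+ j * g * V`_0) + 2%:R * ((-1) ^+ j * g * (V`_1 + j%:R * V`_0)).
Proof.
rewrite /LG !tay_term /= expr1.
have h0 := @gen_c0 K g V j. have h1 := @gen_c1 K g V j.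
rewrite h0 h1.
by rewrite mulr0 add0r.
Qed.

Lemma LG_term2 m j g : LG m ((- 'X) ^+ j * g%:P * U ^+ 2) =
  2%:R * ((-1) ^+ j * g * V`_0 ^+ 2).
Proof.
rewrite /LG !tay_term /=.
have h := @gen_c0sq K g V j. rewrite h.
by rewrite !mulr0 !add0r.
Qed.

Lemma LG_RG G p : LG p.+2 (RG G p.+2) =
  (1 - (2 * p.+2)%:R) * ((-1) ^+ p.+1 * gG G p.+2 1 * V`_0)
  + 2%:R * ((-1) ^+ p.+1 * gG G p.+2 1 * (V`_1 + p.+1%:R * V`_0))
  + 2%:R * ((-1) ^+ p * gG G p.+2 2 * V`_0 ^+ 2).
Proof.
rewrite /RG LG_sum big_ltn // big_ltn //.
rewrite big_nat_cond big1; last first.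
  by move=> k /andP [/andP [hk _] _]; apply: LG_term_big.
have -> : (p.+2 - 1 = p.+1)%N by [].
have -> : (p.+2 - 2 = p)%N by rewrite subSS subSS subn0.
by rewrite LG_term1 LG_term2 addr0.
Qed.


Lemma aux_G (F : fieldType) (sg sg1 c x g1 g2 P1 P2 : F) :
  sg != 0 -> c != 0 -> c * (1 - x) ^+ 2 = 1 -> sg1 = - sg -> P2 = 2 * (P1 + 1) ->
  (1 - P2) * (sg1 * g1 * (c * (x - 1))) + 2 * (sg1 * g1 * (c * x + P1 * (c * (x - 1))))
   + 2 * (sg * g2 * (c * (x - 1)) ^+ 2) = 0 ->
  2 * g2 = (1 + x) * g1.
Proof.
move=> hs hc hx -> -> h.
have E : sg * c * (2 * g2 - (1 + x) * g1) + 2 * sg * g2 * c * (c * (1 - x) ^+ 2 - 1) = 0.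
  rewrite -h; ring.
move: E; rewrite hx subrr mulr0 addr0 => /eqP.
rewrite !mulf_eq0 (negbTE hs) (negbTE hc) /= subr_eq0 => /eqP.
done.
Qed.

Lemma aux_G2 (F : fieldType) (e1 e2 P Q : F) : P != 0 -> Q != 0 ->
  2 * (e2 / P) = Q * (e1 / (P * Q)) -> e1 = 2 * e2.
Proof.
move=> hP hQ h.
have -> : e1 = Q * (e1 / (P * Q)) * P by field; rewrite hP hQ.
by rewrite -h; field.
Qed.

Lemma evq2 (r : {poly int}) : evq (2%:R * r) = 2%:R * evq r.
Proof. by rewrite /evq rmorphM rmorph_nat /= rmorphM rmorph_nat. Qed.

Lemma G_result G p : G_spec G -> G p.+2 p.+1 = 2%:R * G p.+2 p.
Proof.
move=> hG.
have hpoly := G_poly G p.+2 hG isT.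
have := congr1 (LG p.+2) hpoly.
rewrite LGB LGZ LG_Xm mulr0 subr0 LG_PT // LG_RG V0 V1 => /esym h.
have hsg : (-1) ^+ p != 0 :> K by rewrite signr_eq0.
have hc : cq != 0 by rewrite /cq invr_eq0 nz_1q2.
have hcx : cq * (1 - q) ^+ 2 = 1 by rewrite /cq (mulVf nz_1q2).
have hsg1 : (-1) ^+ p.+1 = - (-1) ^+ p :> K by rewrite exprS mulN1r.
have hP2 : (2 * p.+2)%:R = 2 * (p.+1%:R + 1) :> K by rewrite natrM natr1.
have := @aux_G K _ _ _ _ _ _ _ _ hsg hc hcx hsg1 hP2 h.
rewrite /gG.
have -> : (p.+2 - 1 = p.+1)%N by [].
have -> : (p.+2 - 2 = p)%N by rewrite subSS subSS subn0.
rewrite (big_nat_recr p.+1) // subSnn expr1.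
have hP : \prod_(0 <= i < p.+1) (1 + q ^+ (p.+2 - i)) != 0.
  by rewrite prodf_seq_neq0; apply/allP => i _ /=; rewrite nz_1qk.
move=> /(@aux_G2 K _ _ _ _ hP nz_1q1) e.
apply: evq_inj; by rewrite e evq2.
Qed.


Definition etaH (H : nat -> nat -> {poly int}) m k : K :=
  evsq (H m (m - k)%N) /
  ((1 + s) ^+ (m - k + 1) * \prod_(0 <= i < (m - k).+1) (1 + s ^+ (2 * (m - i) - 1))).
Definition L1 : {poly K} := ((1 - s)^-1)%:P * (1%:P - s%:P * 'X).
Definition QS H m : {poly K} :=
  \sum_(1 <= k < m.+1) ((- 'X) ^+ (m - k) * (etaH H m k)%:P * U ^+ (k - 1)).
Definition beta (H : nat -> nat -> {poly int}) m : K :=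
  (-1) ^+ m * evsq (H m (m - 1)%N) / ((1 + s) ^+ m * \prod_(0 <= i < m) (1 + s ^+ (2 * (m - i) - 1))).

Lemma sep_gen (F : fieldType) (A : {poly F}) (c : F) M :
  odd M -> (A \Po 'X^2) + c *: 'X^M = 0 -> A = 0.
Proof.
move=> hM h; apply/polyP => i; have := congr1 (fun r : {poly F} => r`_(2 * i)) h.
rewrite /= coefD coef_comp_poly_Xn // dvdn_mulr // mulKn // coefZ coefXn coef0.
have -> : (2 * i == M)%N = false.
  by apply/negbTE; apply: contraTneq hM => <-; rewrite oddM.
by rewrite mulr0 addr0 coef0.
Qed.

Lemma rearr (F : fieldType) (a e D b : F) : a * (e / D) * b = a * e * b / D.
Proof. ring. Qed.

Lemma L1_eval n : L1.[q ^+ n] = (1 - s ^+ (2 * n + 1)) / (1 - s).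
Proof.
rewrite /L1 !(hornerM, hornerC, hornerD, hornerN, hornerX) mulrC.
by rewrite addn1 exprS /q -exprM.
Qed.

Lemma QS_eval H m n : (QS H m).[q ^+ n] =
  \sum_(1 <= k < m.+1)
        (- q ^+ n) ^+ (m - k) * evsq (H m (m - k)%N)
        * (qint n * qint n.+1) ^+ (k - 1)
        / ((1 + s) ^+ (m - k + 1)
           * \prod_(0 <= i < (m - k).+1) (1 + s ^+ (2 * (m - i) - 1))).
Proof.
rewrite /QS horner_sum; apply: eq_bigr => k _.
by rewrite !hornerM !horner_exp hornerN hornerX hornerC U_eval /etaH rearr.
Qed.

Lemma H_poly H m : H_spec H -> (1 <= m)%N -> PT (2 * m - 1) = L1 * QS H m.
Proof.
move=> hH hm; apply/eqP; rewrite -subr_eq0; apply/eqP.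
apply: (@sep_gen K _ (- (CT (2 * m - 1) + beta H m)) (2 * m - 1)).
  by rewrite oddB ?oddM //; lia.
apply: (@roots_eq0 _ (fun t => s ^+ (2 * t.+1))).
  by move=> a b /s_inj /eqP; rewrite eqn_mul2l /= => /eqP [].
move=> t; set n := (2 * t.+1)%N.
have h := hH m n hm isT.
rewrite hornerD hornerZ hornerXn horner_comp hornerXn hornerD hornerN hornerM.
have ez : s ^+ n ^+ 2 = q ^+ n by rewrite /q -!exprM mulnC.
rewrite ez PT_eval L1_eval QS_eval.
set B := (1 - s ^+ _) / _ * _.
have hB : B = T (2 * m - 1) n - (-1) ^+ (m + n) * evsq (H m (m - 1)%N) * s ^+ ((2 * m - 1) * n) /
      ((1 + s) ^+ m * \prod_(0 <= i < m) (1 + s ^+ (2 * (m - i) - 1))).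
  by rewrite h addrC addKr.
rewrite hB T_closed.
have e1 : (-1) ^+ n = 1 :> K by rewrite /n exprM expr2 mulN1r opprK expr1n.
have e2 : (-1) ^+ (m + n) = (-1) ^+ m :> K by rewrite exprD e1 mulr1.
rewrite e1 e2 mul1r /beta.
have e3 : s ^+ ((2 * m - 1) * n) = s ^+ n ^+ (2 * m - 1) by rewrite -exprM mulnC.
rewrite e3.
have -> : \sum_(j < (2 * m - 1).+1) cc (2 * m - 1) j * s ^+ (2 * j) ^+ n =
          \sum_(j < (2 * m - 1).+1) cc (2 * m - 1) j * (q ^+ n) ^+ j.
  by apply: eq_bigr => j _; rewrite /q -!exprM -mulnA (mulnC j).
have -> : (s ^+ (2 * m - 1)) ^+ n = s ^+ n ^+ (2 * m - 1) by rewrite -!exprM mulnC.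
rewrite /CT; ring.
Qed.


Definition LH (M : nat) (p : {poly K}) : K := 2%:R * tay p 1 - M%:R * tay p 0.

Lemma auxHB (F : fieldType) (a b x y u v : F) :
  a * (x - u) - b * (y - v) = (a * x - b * y) - (a * u - b * v).
Proof. ring. Qed.
Lemma auxHZ (F : fieldType) (a b x y e : F) :
  a * (e * x) - b * (e * y) = e * (a * x - b * y).
Proof. ring. Qed.
Lemma LHB M p r : LH M (p - r) = LH M p - LH M r.
Proof. by rewrite /LH !tayB auxHB. Qed.
Lemma LHZ M a p : LH M (a *: p) = a * LH M p.
Proof. by rewrite /LH !tayZ auxHZ. Qed.
Lemma LH_sum M (I : Type) (r : seq I) (P : pred I) (F : I -> {poly K}) :
  LH M (\sum_(j <- r | P j) F j) = \sum_(j <- r | P j) LH M (F j).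
Proof. by rewrite /LH !tay_sum !big_distrr -sumrB. Qed.

Lemma LH_Xn M j : LH M ('X^j) = 2%:R * j%:R - M%:R.
Proof. by rewrite /LH !tayXn bin1 bin0 mulr1. Qed.

Lemma LH_oneX M : (2 <= M)%N -> LH M ((1 - 'X) ^+ M) = 0.
Proof.
move=> hM; rewrite /LH !tay_oneX; first by rewrite !mulr0 subrr.
all: lia.
Qed.

Lemma aux_symH (F : fieldType) (A C S J Mv : F) :
  A * C * (- S) * (2 * (Mv - J) - Mv) = A * C * S * (2 * J - Mv).
Proof. ring. Qed.

Lemma LH_PT M : odd M -> (2 <= M)%N -> LH M (PT M) = 0.
Proof.
move=> hodd hM; rewrite /PT LH_sum.
under eq_bigr do rewrite LHZ LH_Xn.
set A := ((1 - q) ^+ M)^-1.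
pose a j := A * 'C(M, j)%:R * (-1) ^+ j * (2%:R * j%:R - M%:R).
have e : \sum_(j < M.+1) cc M j * (2%:R * j%:R - M%:R) =
         \sum_(j < M.+1) a j * f M j.
  by apply: eq_bigr => j _; rewrite /cc /a mulrAC.
have sym : forall j, (j <= M)%N -> a (M - j)%N = a j.
  move=> j hj; rewrite /a bin_sub // sign_sub // natrB //.
  by rewrite -signr_odd hodd expr1 mulN1r aux_symH.
have hp := @pairing M a (f M) sym (@f_pair M).
have hs : \sum_(j < M.+1) a j = 0.
  have := LH_oneX M hM; rewrite oneX_exp LH_sum.
  under eq_bigr do rewrite LHZ LH_Xn.
  move=> h; rewrite /a; under eq_bigr do rewrite -!mulrA.
  by rewrite -big_distrr /=; under eq_bigr do rewrite mulrA; rewrite h mulr0.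
rewrite e; apply: (mulfI nz_2); by rewrite hp hs mulr0.
Qed.

Lemma termL_shift_gen (F : fieldType) (g : F) (l u v : {poly F}) j k :
  u \Po ('X + 1) = 'X * v ->
  (l * ((- 'X) ^+ j * g%:P * u ^+ k)) \Po ('X + 1) =
  'X ^+ k * ((l \Po ('X + 1)) * ((- ('X + 1)) ^+ j * g%:P * v ^+ k)).
Proof. by move=> hu; rewrite comp_polyM (@term_shift_gen F g u v j k hu) mulrCA. Qed.

Definition L1' : {poly K} := L1 \Po ('X + 1).

Lemma tay_termL j k g i : tay (L1 * ((- 'X) ^+ j * g%:P * U ^+ k)) i =
  if (i < k)%N then 0 else (L1' * ((- ('X + 1)) ^+ j * g%:P * V ^+ k))`_(i - k).
Proof. apply: tay_shift. have h := @termL_shift_gen K g L1 U V j k U_shift. exact h. Qed.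

Lemma L1c_gen (F : fieldType) (c a : F) :
  ((c%:P * (1%:P - a%:P * 'X)) \Po ('X + 1))`_0 = c * (1 - a) /\
  ((c%:P * (1%:P - a%:P * 'X)) \Po ('X + 1))`_1 = - (c * a).
Proof.
rewrite !(comp_polyM, comp_polyB, comp_polyC, comp_polyX).
rewrite !coefCM !coefB !coefCM !coefD !coefX !coefC /=.
split; ring.
Qed.

Lemma L1'0 : L1'`_0 = (1 - s)^-1 * (1 - s).
Proof. exact: (proj1 (@L1c_gen K _ _)). Qed.
Lemma L1'1 : L1'`_1 = - ((1 - s)^-1 * s).
Proof. exact: (proj2 (@L1c_gen K _ _)). Qed.

Lemma LH_termL0 M j g : LH M (L1 * ((- 'X) ^+ j * g%:P * U ^+ 0)) =
  2%:R * (L1'`_0 * ((-1) ^+ j * g * j%:R) + L1'`_1 * ((-1) ^+ j * g))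
  - M%:R * (L1'`_0 * ((-1) ^+ j * g)).
Proof.
rewrite /LH !tay_termL /= !subn0.
have c1 := @coef1M_gen K L1' ((- ('X + 1)) ^+ j * g%:P * V ^+ 0).
have c0 := @coef0M K L1' ((- ('X + 1)) ^+ j * g%:P * V ^+ 0).
have h0 := @gen_c0 K g (V ^+ 0) j. have h1 := @gen_c1 K g (V ^+ 0) j.
rewrite c1 c0 h0 h1 expr0 !coef1 /= add0r !mulr1.
done.
Qed.

Lemma LH_termL1 M j g : LH M (L1 * ((- 'X) ^+ j * g%:P * U ^+ 1)) =
  2%:R * (L1'`_0 * ((-1) ^+ j * g * V`_0)) - M%:R * 0.
Proof.
rewrite /LH !tay_termL /= expr1.
have c0 := @coef0M K L1' ((- ('X + 1)) ^+ j * g%:P * V).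
have h0 := @gen_c0 K g V j.
by rewrite c0 h0.
Qed.

Lemma LH_termLbig M j k g : (2 <= k)%N -> LH M (L1 * ((- 'X) ^+ j * g%:P * U ^+ k)) = 0.
Proof.
move=> hk; rewrite /LH !tay_termL.
rewrite (leq_trans _ hk) // (leq_trans _ hk) //.
by rewrite !mulr0 subrr.
Qed.

Lemma LH_QR H p M : LH M (L1 * QS H p.+2) =
  2%:R * (L1'`_0 * ((-1) ^+ p.+1 * etaH H p.+2 1 * p.+1%:R) + L1'`_1 * ((-1) ^+ p.+1 * etaH H p.+2 1))
  - M%:R * (L1'`_0 * ((-1) ^+ p.+1 * etaH H p.+2 1))
  + (2%:R * (L1'`_0 * ((-1) ^+ p * etaH H p.+2 2 * V`_0)) - M%:R * 0).
Proof.
rewrite /QS big_distrr LH_sum big_ltn // big_ltn //.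
rewrite big_nat_cond big1; last first.
  move=> k /andP [/andP [hk _] _]; apply: LH_termLbig; lia.
have -> : (p.+2 - 1 = p.+1)%N by [].
have -> : (p.+2 - 2 = p)%N by rewrite subSS subSS subn0.
have -> : (1 - 1 = 0)%N by [].
have -> : (2 - 1 = 1)%N by [].
by rewrite LH_termL0 LH_termL1 addr0.
Qed.


Lemma aux_H (F : fieldType) (sg e1 e2 x P1 : F) : sg != 0 -> 1 - x != 0 -> 1 + x != 0 ->
  2 * ((1 - x)^-1 * (1 - x) * (- sg * e1 * P1) + - ((1 - x)^-1 * x) * (- sg * e1))
  - (2 * P1 + 1) * ((1 - x)^-1 * (1 - x) * (- sg * e1))
  + (2 * ((1 - x)^-1 * (1 - x) * (sg * e2 * (((1 - x ^+ 2) ^+ 2)^-1 * (x ^+ 2 - 1)))) - (2 * P1 + 1) * 0) = 0 ->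
  e1 * (1 + x) ^+ 2 = 2 * e2.
Proof.
move=> hs h1 h2 h.
have h3 : 1 - x ^+ 2 != 0 by rewrite -[1 as X in X - _](expr1n _ 2) subr_sqr mulf_neq0.
have E : sg / ((1 - x) * (1 + x)) * (e1 * (1 + x) ^+ 2 - 2 * e2) = 0.
  rewrite -h; field; by rewrite h1 h2 h3.
move: E => /eqP; rewrite mulf_eq0 => /orP [].
  by rewrite mulf_eq0 invr_eq0 mulf_eq0 (negbTE hs) (negbTE h1) (negbTE h2).
by rewrite subr_eq0 => /eqP.
Qed.

Lemma aux_H2 (F : fieldType) (h1 h2 Y Z Q : F) : Y != 0 -> Z != 0 -> Q != 0 ->
  h1 / (Q * Y * (Z * Q)) * Q ^+ 2 = 2 * (h2 / (Y * Z)) -> h1 = 2 * h2.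
Proof.
move=> hY hZ hQ h.
have -> : h1 = h1 / (Q * Y * (Z * Q)) * Q ^+ 2 * (Y * Z) by field; rewrite hY hZ hQ.
by rewrite h; field; rewrite hY hZ.
Qed.

Lemma nz_1s1 : 1 + s != 0.
Proof. by rewrite -[s]expr1 nz_1sk. Qed.

Lemma evsq2 (r : {poly int}) : evsq (2%:R * r) = 2%:R * evsq r.
Proof. by rewrite /evsq rmorphM rmorph_nat. Qed.

Lemma H_result H p : H_spec H -> H p.+2 p.+1 = 2%:R * H p.+2 p.
Proof.
move=> hH.
have hpoly := H_poly H p.+2 hH isT.
have := congr1 (LH (2 * p.+2 - 1)) hpoly.
rewrite LH_PT; last 2 first.
- by rewrite oddB ?oddM //; lia.
- lia.
rewrite LH_QR L1'0 L1'1 V0 /cq /q => /esym h.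
have eM : (2 * p.+2 - 1 = (2 * p.+1).+1)%N by lia.
rewrite eM -[(2 * p.+1).+1%:R]natr1 natrM exprS mulN1r in h.
have hsg : (-1) ^+ p != 0 :> K by rewrite signr_eq0.
have := @aux_H K _ _ _ _ _ hsg nz_1s (nz_1sk 1) h.
rewrite /etaH.
have -> : (p.+2 - 1 = p.+1)%N by [].
have -> : (p.+2 - 2 = p)%N by rewrite subSS subSS subn0.
rewrite (big_nat_recr p.+1) // subSnn.
have -> : (2 * 1 - 1 = 1)%N by [].
rewrite expr1 !addn1 exprS.
have hY : (1 + s) ^+ p.+1 != 0 by rewrite expf_eq0 (negbTE nz_1s1) andbF.
have hZ : \prod_(0 <= i < p.+1) (1 + s ^+ (2 * (p.+2 - i) - 1)) != 0.
  by rewrite prodf_seq_neq0; apply/allP => i _ /=; rewrite nz_1sk.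
move=> /(@aux_H2 K _ _ _ _ _ hY hZ nz_1s1) e.
apply: evsq_inj; by rewrite e evsq2.
Qed.


Theorem corollary3p9 (G H : nat -> nat -> {poly int}) :
  G_spec G -> H_spec H ->
  forall m : nat, (2 <= m)%N ->
    G m (m - 1)%N = 2%:R * G m (m - 2)%N /\
    H m (m - 1)%N = 2%:R * H m (m - 2)%N.
Proof.
move=> hG hH [|[|p]] // _.
have -> : (p.+2 - 1 = p.+1)%N by [].
have -> : (p.+2 - 2 = p)%N by rewrite subSS subSS subn0.
split; [exact: G_result | exact: H_result].
Qed.
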